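(* Let $\Delta\ge3$ and $k\ge2$, and let $X$ be the $k\times k$ symmetric tridiagonal matrix with diagonal entries $0,\dots,0,2$ (zeros in positions $1,\dots,k-1$ and $2$ in position $k$), off-diagonal entries in positions $(j,j+1),(j+1,j)$ equal to $\sqrt{\Delta-1}$ for $1\le j\le k-2$, and equal to $\sqrt{\Delta-2}$ for $j=k-1$. If $\Delta\ge4$, or $\Delta=3$ and $k\ge4$, then \[ \rho(X)<2\sqrt{\Delta-1}\cos\frac{\pi}{2k+1}, \] where $\rho(X)$ is the spectral radius of $X$. *)

(* Defs.v *)
From Stdlib Require Import Reals Lra Lia Arith ClassicalEpsilon.
Open Scope R_scope.

Fixpoint rsum (n : nat) (f : nat -> R) : R :=
  match n with
  | O => 0
  | S m => rsum m f + f m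
  end.

(* The tridiagonal matrix X (0-based indices 0..k-1):
   diagonal: 0 except the last entry (index k-1) which is 2;
   entries (i,i+1),(i+1,i): sqrt(Delta-1) if i+1 <= k-2, sqrt(Delta-2) if i+1 = k-1;
   all other entries 0. *)
Definition Xmat (Delta k : nat) (i j : nat) : R :=
  if Nat.eqb i j then (if Nat.eqb i (k - 1) then 2 else 0)
  else if orb (Nat.eqb j (S i)) (Nat.eqb i (S j)) then
    (if Nat.eqb (Nat.max i j) (k - 1) then sqrt (INR Delta - 2)
     else sqrt (INR Delta - 1))
  else 0.

Definition is_eigenvalue (k : nat) (M : nat -> nat -> R) (lambda : R) : Prop :=
  exists v : nat -> R,
    (exists i, (i < k)%nat /\ v i <> 0) /\
    forall i, (i < k)%nat -> rsum k (fun j => M i j * v j) = lambda * v i.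

Definition spectral_radius (k : nat) (M : nat -> nat -> R) : R :=
  epsilon (inhabits 0)
    (is_lub (fun r => exists lambda, is_eigenvalue k M lambda /\ r = Rabs lambda)).

(* Main.v *)
Require Import Defs.
From Stdlib Require Import Reals Lra Lia Arith ClassicalEpsilon.
Open Scope R_scope.

Lemma rsum_ext n f g : (forall j, (j<n)%nat -> f j = g j) -> rsum n f = rsum n g.
Proof. induction n; simpl; intros H; auto. rewrite IHn, H; auto; intros; apply H; lia. Qed.

Lemma rsum_zero n f : (forall j, (j<n)%nat -> f j = 0) -> rsum n f = 0.
Proof. induction n; simpl; intros H; auto. rewrite IHn, H; auto; try lra; intros; apply H; lia. Qed.

Lemma rsum_trunc m n f : (m <= n)%nat -> (forall j, (m<=j)%nat -> (j<n)%nat -> f j = 0) -> rsum n f = rsum m f.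
Proof.
  induction n; intros Hm H.
  - replace m with 0%nat by lia; reflexivity.
  - destruct (Nat.eq_dec m (S n)) as [->|Hne]; [reflexivity|].
    simpl. rewrite IHn by (try lia; intros; apply H; lia). rewrite H by lia. lra.
Qed.

Definition sD (D : nat) := sqrt (INR D - 1).
Definition tD (D : nat) := sqrt (INR D - 2).

Lemma X_far D k i j : i <> j -> j <> S i -> i <> S j -> Xmat D k i j = 0.
Proof.
  intros H1 H2 H3; unfold Xmat.
  destruct (Nat.eqb_spec i j); [contradiction|].
  destruct (Nat.eqb_spec j (S i)); [contradiction|].
  destruct (Nat.eqb_spec i (S j)); [contradiction|]. reflexivity.
Qed.

Lemma X_diag D k i : Xmat D k i i = if Nat.eqb i (k-1) then 2 else 0.
Proof. unfold Xmat; rewrite Nat.eqb_refl; reflexivity. Qed.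

Lemma X_up D k i : Xmat D k i (S i) = if Nat.eqb (S i) (k-1) then tD D else sD D.
Proof.
  unfold Xmat. rewrite (proj2 (Nat.eqb_neq i (S i))) by lia. rewrite Nat.eqb_refl. simpl orb.
  rewrite Nat.max_r by lia. reflexivity.
Qed.

Lemma X_down D k i : (1<=i)%nat -> Xmat D k i (i-1) = if Nat.eqb i (k-1) then tD D else sD D.
Proof.
  intros Hi. destruct i as [|i]; [lia|]. replace (S i - 1)%nat with i by lia. unfold Xmat.
  rewrite (proj2 (Nat.eqb_neq (S i) i)) by lia.
  rewrite (proj2 (Nat.eqb_neq i (S (S i)))) by lia. rewrite Nat.eqb_refl. simpl orb.
  rewrite Nat.max_l by lia. reflexivity.
Qed.

Lemma row_mid D k g i : (S i < k)%nat ->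
  rsum k (fun j => Xmat D k i j * g j) =
  Xmat D k i (i-1) * g (i-1)%nat + Xmat D k i i * g i + Xmat D k i (S i) * g (S i).
Proof.
  intros Hi. rewrite (rsum_trunc (S (S i)) k) by (try lia; intros; rewrite X_far by lia; lra).
  destruct i as [|i].
  - simpl. rewrite X_diag. rewrite (proj2 (Nat.eqb_neq 0 (k-1))) by lia. lra.
  - replace (S i - 1)%nat with i by lia. simpl.
    rewrite rsum_zero by (intros; rewrite X_far by lia; lra). lra.
Qed.

Lemma row_last D k g : (2 <= k)%nat ->
  rsum k (fun j => Xmat D k (k-1) j * g j) =
  Xmat D k (k-1) (k-2) * g (k-2)%nat + Xmat D k (k-1) (k-1) * g (k-1)%nat.
Proof.
  intros Hk. destruct k as [|[|m]]; [lia|lia|].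
  replace (S (S m) - 1)%nat with (S m) by lia. replace (S (S m) - 2)%nat with m by lia.
  simpl. rewrite rsum_zero by (intros; rewrite X_far by lia; lra). lra.
Qed.
Lemma st_facts D : (3 <= D)%nat ->
  0 < tD D /\ tD D < sD D /\ sD D * sD D = INR D - 1 /\ tD D * tD D = INR D - 2.
Proof.
  intros H. apply le_INR in H. simpl in H.
  assert (H1 : sD D * sD D = INR D - 1) by (apply sqrt_sqrt; lra).
  assert (H2 : tD D * tD D = INR D - 2) by (apply sqrt_sqrt; lra).
  assert (0 < tD D) by (apply sqrt_lt_R0; lra).
  assert (0 <= sD D) by (apply sqrt_pos).
  repeat split; auto. nra.
Qed.

Lemma X_mid_diag D k i : (S i < k)%nat -> Xmat D k i i = 0.
Proof. intros. rewrite X_diag, (proj2 (Nat.eqb_neq i (k-1))) by lia. reflexivity. Qed.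

Lemma X_down_mid D k i : (1 <= i)%nat -> (S i < k)%nat -> Xmat D k i (i-1) = sD D.
Proof. intros. rewrite X_down, (proj2 (Nat.eqb_neq i (k-1))) by lia; auto. Qed.

Lemma X_last_diag D k : Xmat D k (k-1) (k-1) = 2.
Proof. rewrite X_diag, Nat.eqb_refl. reflexivity. Qed.

Lemma X_last_down D k : (2 <= k)%nat -> Xmat D k (k-1) (k-2) = tD D.
Proof. intros. replace (k-2)%nat with (k-1-1)%nat by lia. rewrite X_down, Nat.eqb_refl by lia. auto. Qed.

Lemma X_up_bounds D k i : (3 <= D)%nat -> 0 < Xmat D k i (S i) <= sD D.
Proof. intros H. destruct (st_facts D H) as (?&?&?&?). rewrite X_up.
  destruct (Nat.eqb (S i) (k-1)); lra. Qed.

Lemma X_down0 D k : (2 <= k)%nat -> Xmat D k 0 (0-1) = 0.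
Proof. intros. simpl. rewrite X_diag, (proj2 (Nat.eqb_neq 0 (k-1))) by lia. auto. Qed.

Fixpoint vp (D k : nat) (l : R) (n : nat) : R * R :=
  match n with
  | O => (0, 1)
  | S m => (snd (vp D k l m),
      ((l - Xmat D k m m) * snd (vp D k l m) - Xmat D k m (m-1) * fst (vp D k l m))
        / Xmat D k m (S m))
  end.

Definition vv D k l n := snd (vp D k l n).

Lemma vv_S D k l m : vv D k l (S m) =
  ((l - Xmat D k m m) * vv D k l m - Xmat D k m (m-1) * fst (vp D k l m)) / Xmat D k m (S m).
Proof. reflexivity. Qed.
Lemma fst_vp_S D k l m : fst (vp D k l (S m)) = vv D k l m.
Proof. reflexivity. Qed.

Definition F D k l := Xmat D k (k-1) (k-2) * vv D k l (k-2)%nat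
  + Xmat D k (k-1) (k-1) * vv D k l (k-1)%nat - l * vv D k l (k-1)%nat.

Lemma Xdown_fst D k l m : (S m < k)%nat -> (2 <= k)%nat ->
  Xmat D k m (m-1) * fst (vp D k l m) = sD D * fst (vp D k l m).
Proof. intros. destruct m as [|m]. simpl. lra. rewrite X_down_mid by lia. auto. Qed.

Lemma Xdown_vv D k l m : (2 <= k)%nat -> Xmat D k m (m-1) * vv D k l (m-1) = Xmat D k m (m-1) * fst (vp D k l m).
Proof. intros. destruct m as [|m]. rewrite X_down0 by lia. lra.
  replace (S m - 1)%nat with m by lia. reflexivity. Qed.

Lemma vv_row D k l m : (3 <= D)%nat -> (2 <= k)%nat -> (S m < k)%nat ->
  rsum k (fun j => Xmat D k m j * vv D k l j) = l * vv D k l m.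
Proof.
  intros HD Hk Hm. rewrite row_mid by lia. rewrite Xdown_vv by lia.
  pose proof (X_up_bounds D k m HD).
  unfold vv; simpl. field. lra.
Qed.

Lemma root_eig D k l : (3 <= D)%nat -> (2 <= k)%nat -> F D k l = 0 -> is_eigenvalue k (Xmat D k) l.
Proof.
  intros HD Hk HF. exists (vv D k l). split.
  - exists 0%nat. split. lia. unfold vv; simpl; lra.
  - intros i Hi. destruct (Nat.eq_dec i (k-1)) as [->|Hne].
    + rewrite row_last by lia. unfold F in HF. lra.
    + apply vv_row; auto; lia.
Qed.

Lemma eig_root D k l : (3 <= D)%nat -> (2 <= k)%nat -> is_eigenvalue k (Xmat D k) l -> F D k l = 0.
Proof.
  intros HD Hk [v [[i0 [Hi0 Hv0]] Hrow]].
  assert (Hpair : forall i, (S i < k)%nat -> v i = v 0%nat * vv D k l i /\ v (S i) = v 0%nat * vv D k l (S i)).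
  { induction i as [|i IH]; intros Hi.
    - pose proof (Hrow 0%nat ltac:(lia)) as R. rewrite row_mid in R by lia.
      rewrite X_down0, X_mid_diag in R by lia.
      pose proof (X_up_bounds D k 0 HD).
      unfold vv; simpl. rewrite (X_mid_diag D k 0) by lia. split. lra.
      assert (R' : Xmat D k 0 1 * v 1%nat = l * v 0%nat) by lra.
      transitivity (Xmat D k 0 1 * v 1%nat / Xmat D k 0 1). field; lra.
      rewrite R'. field; lra.
    - destruct (IH ltac:(lia)) as [E1 E2]. split; auto.
      pose proof (Hrow (S i) ltac:(lia)) as R. rewrite row_mid in R by lia.
      replace (S i - 1)%nat with i in R by lia.
      rewrite X_mid_diag in R by lia.
      pose proof (X_up_bounds D k (S i) HD).
      rewrite vv_S, fst_vp_S, X_mid_diag by lia.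
      replace (S i - 1)%nat with i by lia.
      rewrite E1, E2 in R.
      assert (R' : Xmat D k (S i) (S (S i)) * v (S (S i)) = l * (v 0%nat * vv D k l (S i)) - Xmat D k (S i) i * (v 0%nat * vv D k l i)) by lra.
      transitivity (Xmat D k (S i) (S (S i)) * v (S (S i)) / Xmat D k (S i) (S (S i))). field; lra.
      rewrite R'. field; lra. }
  assert (Hall : forall i, (i < k)%nat -> v i = v 0%nat * vv D k l i).
  { intros i Hi. destruct (Nat.eq_dec i (k-1)) as [->|Hne].
    - replace (k-1)%nat with (S (k-2)) by lia. apply Hpair; lia.
    - apply Hpair; lia. }
  assert (H0 : v 0%nat <> 0).
  { intro H. apply Hv0. rewrite Hall, H by auto. lra. }
  pose proof (Hrow (k-1)%nat ltac:(lia)) as R. rewrite row_last in R by lia.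
  rewrite (Hall (k-2)%nat), (Hall (k-1)%nat) in R by lia. unfold F.
  apply (Rmult_eq_reg_l (v 0%nat)); auto. rewrite Rmult_0_r. lra.
Qed.
Lemma cont_comb (g h : R -> R) a b c : continuity g -> continuity h ->
  continuity (fun l => ((l - a) * g l - b * h l) / c).
Proof.
  intros Hg Hh x. unfold Rdiv.
  apply (continuity_pt_mult (fun l => (l - a) * g l - b * h l) (fun _ => / c)).
  - apply (continuity_pt_minus (fun l => (l - a) * g l) (fun l => b * h l)).
    + apply (continuity_pt_mult (fun l => l - a) g); [|apply Hg].
      apply (continuity_pt_minus (fun l => l) (fun _ => a)).
      * apply derivable_continuous_pt, derivable_pt_id.
      * apply continuity_pt_const; intros ??; reflexivity.
    + apply (continuity_pt_mult (fun _ => b) h); [|apply Hh].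
      apply continuity_pt_const; intros ??; reflexivity.
  - apply continuity_pt_const; intros ??; reflexivity.
Qed.

Lemma vp_cont D k n : continuity (fun l => fst (vp D k l n)) /\ continuity (fun l => snd (vp D k l n)).
Proof.
  induction n as [|n [IH1 IH2]].
  - split; simpl; apply continuity_const; intros ??; reflexivity.
  - split; [exact IH2|]. simpl. apply cont_comb; auto.
Qed.

Lemma F_cont D k : continuity (F D k).
Proof.
  destruct (vp_cont D k (k-2)) as [_ H1]. destruct (vp_cont D k (k-1)) as [_ H2].
  intros x. unfold F.
  apply (continuity_pt_minus (fun l => Xmat D k (k-1) (k-2) * vv D k l (k-2)%nat + Xmat D k (k-1) (k-1) * vv D k l (k-1)%nat) (fun l => l * vv D k l (k-1)%nat)).
  - apply (continuity_pt_plus (fun l => Xmat D k (k-1) (k-2) * vv D k l (k-2)%nat) (fun l => Xmat D k (k-1) (k-1) * vv D k l (k-1)%nat)).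
    + apply (continuity_pt_scal (fun l => vv D k l (k-2)%nat)). apply H1.
    + apply (continuity_pt_scal (fun l => vv D k l (k-1)%nat)). apply H2.
  - apply (continuity_pt_mult (fun l => l) (fun l => vv D k l (k-1)%nat)).
    + apply derivable_continuous_pt, derivable_pt_id.
    + apply H2.
Qed.
Lemma sin_rec x a : sin (x + a) = 2 * cos a * sin x - sin (x - a).
Proof. rewrite sin_plus, sin_minus. ring. Qed.

Lemma vv_trig D k l a : (3 <= D)%nat -> (2 <= k)%nat -> sin a <> 0 -> l = 2 * sD D * cos a ->
  forall m, (S m < k)%nat -> fst (vp D k l m) = sin (INR m * a) / sin a /\ vv D k l m = sin (INR (S m) * a) / sin a.
Proof.
  intros HD Hk Ha Hl. destruct (st_facts D HD) as (Ht & Hts & Hs2 & Ht2).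
  induction m as [|m IH]; intros Hm.
  - simpl. split. rewrite Rmult_0_l, sin_0. field; auto. unfold vv; simpl. rewrite Rmult_1_l. field; auto.
  - destruct (IH ltac:(lia)) as [E1 E2]. split. rewrite fst_vp_S. exact E2.
    rewrite vv_S, Xdown_fst, X_mid_diag by lia. rewrite X_up, (proj2 (Nat.eqb_neq (S m) (k-1))) by lia.
    rewrite E1, E2, Hl.
    replace (INR (S (S m)) * a) with (INR (S m) * a + a) by (rewrite (S_INR (S m)); ring).
    replace (INR m * a) with (INR (S m) * a - a) by (rewrite (S_INR m); ring).
    rewrite sin_rec. field. split; auto. lra.
Qed.

Lemma vv_big D k l : (3 <= D)%nat -> (2 <= k)%nat -> 2 * sD D <= l ->
  forall m, (m < k)%nat -> 0 <= fst (vp D k l m) <= vv D k l m /\ 0 < vv D k l m.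
Proof.
  intros HD Hk Hl. destruct (st_facts D HD) as (Ht & Hts & Hs2 & Ht2).
  induction m as [|m IH]; intros Hm.
  - unfold vv; simpl; lra.
  - destruct (IH ltac:(lia)) as [[E0 E1] E2]. rewrite fst_vp_S, vv_S, Xdown_fst, X_mid_diag by lia.
    pose proof (X_up_bounds D k m HD) as Hb.
    set (b := Xmat D k m (S m)) in *.
    assert (vv D k l m <= ((l - 0) * vv D k l m - sD D * fst (vp D k l m)) / b).
    { apply (Rmult_le_reg_l b); [lra|]. field_simplify; [|lra].
      assert (sD D * fst (vp D k l m) <= sD D * vv D k l m) by (apply Rmult_le_compat_l; lra).
      assert (b * vv D k l m <= sD D * vv D k l m) by (apply Rmult_le_compat_r; lra).
      assert (2 * sD D * vv D k l m <= l * vv D k l m) by (apply Rmult_le_compat_r; lra).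
      lra. }
    lra.
Qed.

Lemma F_root D k : (3 <= D)%nat -> (2 <= k)%nat -> exists l, F D k l = 0.
Proof.
  intros HD Hk. destruct (st_facts D HD) as (Ht & Hts & Hs2 & Ht2).
  assert (HkR : 2 <= INR k) by (apply (le_INR 2); lia).
  set (a := PI / INR k).
  assert (Ha0 : 0 < a) by (unfold a; apply Rdiv_lt_0_compat; [apply PI_RGT_0|lra]).
  assert (HaP : INR k * a = PI) by (unfold a; field; lra).
  assert (Hsa : 0 < sin a). { apply sin_gt_0; auto. pose proof PI_RGT_0. nra. }
  set (l0 := 2 * sD D * cos a).
  assert (Hl0 : l0 <= 2 * sD D). { unfold l0. pose proof (COS_bound a) as [_ ?]. nra. }
  destruct (vv_trig D k l0 a HD Hk ltac:(lra) eq_refl (k-2) ltac:(lia)) as [E1 E2].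
  assert (Hpos : 0 < vv D k l0 (k-2)).
  { rewrite E2. apply Rdiv_lt_0_compat; auto. apply sin_gt_0.
    - apply Rmult_lt_0_compat; auto. apply lt_0_INR; lia.
    - rewrite <- HaP. apply Rmult_lt_compat_r; auto. apply lt_INR; lia. }
  assert (Hz : vv D k l0 (k-1) = 0).
  { replace (k-1)%nat with (S (k-2)) by lia.
    rewrite vv_S, Xdown_fst, X_mid_diag, E1, E2 by lia.
    unfold l0. 
    replace (sin (INR (S (k-2)) * a)) with (sin (INR (S (k - 2)) * a)) by reflexivity.
    replace (INR (k-2) * a) with (INR (S (k-2)) * a - a) by (rewrite (S_INR (k-2)); ring).
    assert (Hk0 : sin (INR (S (k-2)) * a + a) = 0).
    { replace (INR (S (k-2)) * a + a) with PI. apply sin_PI. rewrite <- HaP.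
      assert (HkS : INR k = INR (S (k-2)) + 1) by (rewrite <- S_INR; f_equal; lia).
      rewrite HkS; ring. }
    rewrite sin_rec in Hk0.
    assert (Hnum : (2 * sD D * cos a - 0) * (sin (INR (S (k - 2)) * a) / sin a) -
       sD D * (sin (INR (S (k - 2)) * a - a) / sin a) = 0).
    { apply (Rmult_eq_reg_l (sin a)); [|lra]. field_simplify; [|lra]. nra. }
    rewrite Hnum. unfold Rdiv. ring. }
  assert (HF0 : 0 < F D k l0).
  { unfold F. rewrite Hz, X_last_down by lia. nra. }
  set (M := 2 * sD D + 3).
  destruct (vv_big D k M HD Hk ltac:(unfold M; lra) (k-1) ltac:(lia)) as [[B0 B1] B2].
  assert (HFM : F D k M < 0).
  { unfold F. rewrite X_last_down, X_last_diag by lia.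
    replace (k-1)%nat with (S (k-2)) in B1 by lia. rewrite fst_vp_S in B1.
    replace (S (k-2)) with (k-1)%nat in B1 by lia.
    assert (tD D * vv D k M (k-2) <= tD D * vv D k M (k-1)) by (apply Rmult_le_compat_l; lra).
    assert (0 < (M - tD D - 2) * vv D k M (k-1)) by (apply Rmult_lt_0_compat; [unfold M; lra | exact B2]).
    lra. }
  destruct (IVT (fun l => - F D k l) l0 M) as [z [_ Hz']].
  - apply continuity_opp, F_cont.
  - unfold M; lra.
  - lra.
  - lra.
  - exists z. lra.
Qed.
Lemma PI_ub : PI <= 324/100.
Proof.
  pose proof PI_RGT_0 as HP0. pose proof PI_4 as HP4.
  destruct (SIN (PI/6) ltac:(lra) ltac:(lra)) as [H _]. rewrite sin_PI6 in H.
  unfold sin_lb, sin_approx, sin_term in H. simpl in H.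
  set (a := PI/6) in *.
  assert (Ha : 0 <= a <= 4/6) by (unfold a; lra).
  assert (Hpa : PI = 6 * a) by (unfold a; field). clearbody a.
  assert (H5 : 0 <= a * (a * (a * (a * (a * 1)))) / 120 - a * (a * (a * (a * (a * (a * (a * 1)))))) / 5040).
  { assert (0 <= a*a*a*a*a) by (repeat apply Rmult_le_pos; lra). 
    assert (a*a <= 1) by nra. nra. }
  assert (a * (a * (a * 1)) <= 4/9 * a) by nra.
  assert (a <= 54/100) by (field_simplify in H; lra).
  lra.
Qed.

Lemma cos_lb2 x : 0 <= x <= PI/2 -> 1 - x*x/2 <= cos x.
Proof.
  intros Hx. pose proof PI_4 as HP4.
  destruct (COS x ltac:(lra) ltac:(lra)) as [H _].
  unfold cos_lb, cos_approx, cos_term in H. simpl in H.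
  assert (x*x <= 4) by nra.
  assert (0 <= x*x*x*x) by (repeat apply Rmult_le_pos; lra).
  assert (x*x*x*x*x*x <= 30 * (x*x*x*x)) by nra.
  field_simplify in H. nra.
Qed.

Lemma key_ineq D k : (3 <= D)%nat -> (2 <= k)%nat -> (4 <= D)%nat \/ (D = 3%nat /\ (4 <= k)%nat) ->
  1 + 2 * sD D - sD D * sD D < 2 * cos (PI / INR (2 * k + 1)).
Proof.
  intros HD Hk Hc. destruct (st_facts D HD) as (Ht & Hts & Hs2 & Ht2).
  pose proof PI_ub. pose proof PI_RGT_0.
  set (th := PI / INR (2 * k + 1)).
  assert (Hk5 : 5 <= INR (2 * k + 1)) by (replace 5 with (INR 5) by (simpl; lra); apply le_INR; lia).
  assert (Hth0 : 0 < th) by (unfold th; apply Rdiv_lt_0_compat; lra).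
  assert (Hth5 : th <= PI / 5).
  { unfold th. apply Rmult_le_compat_l; [lra|]. apply Rinv_le_contravar; lra. }
  assert (HC := cos_lb2 th ltac:(lra)).
  assert (0 <= sD D) by (unfold sD; apply sqrt_pos).
  destruct Hc as [H4 | [H3 Hk4]].
  - destruct (Nat.eq_dec D 4) as [->|H5].
    + simpl in Hs2. assert (sD 4 < 17321/10000) by nra. nra.
    + assert (5 <= INR D) by (replace 5 with (INR 5) by (simpl; lra); apply le_INR; lia). assert (2 <= sD D) by nra. nra.
  - subst D. simpl in Hs2.
    assert (Hk9 : 9 <= INR (2 * k + 1)) by (replace 9 with (INR 9) by (simpl; lra); apply le_INR; lia).
    assert (Hth9 : th <= PI / 9).
    { unfold th. apply Rmult_le_compat_l; [lra|]. apply Rinv_le_contravar; lra. }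
    assert (sD 3 < 14143/10000) by nra. nra.
Qed.
Lemma X_nonneg D k i j : (3 <= D)%nat -> 0 <= Xmat D k i j.
Proof.
  intros HD. destruct (st_facts D HD) as (Ht & Hts & _ & _).
  unfold Xmat. destruct (Nat.eqb i j); [destruct (Nat.eqb i (k-1)); lra|].
  destruct (orb _ _); [|lra]. fold (tD D) (sD D). destruct (Nat.eqb _ _); lra.
Qed.

Lemma argmax n (r : nat -> R) : (0 < n)%nat -> exists i0, (i0 < n)%nat /\ forall i, (i < n)%nat -> r i <= r i0.
Proof.
  induction n as [|n IH]; intros Hn; [lia|].
  destruct (Nat.eq_dec n 0) as [->|Hn0].
  - exists 0%nat. split; [lia|]. intros i Hi. replace i with 0%nat by lia. lra.
  - destruct (IH ltac:(lia)) as [i0 [Hi0 Hm]].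
    destruct (Rle_dec (r n) (r i0)).
    + exists i0. split; [lia|]. intros i Hi. destruct (Nat.eq_dec i n) as [->|]; auto. apply Hm; lia.
    + exists n. split; [lia|]. intros i Hi. destruct (Nat.eq_dec i n) as [->|]; [lra|].
      specialize (Hm i ltac:(lia)). lra.
Qed.

Lemma eig_bound D k l : (3 <= D)%nat -> (2 <= k)%nat -> (4 <= D)%nat \/ (D = 3%nat /\ (4 <= k)%nat) ->
  is_eigenvalue k (Xmat D k) l -> Rabs l < 2 * sD D * cos (PI / INR (2 * k + 1)).
Proof.
  intros HD Hk Hc Heig.
  pose proof (key_ineq D k HD Hk Hc) as Hkey.
  destruct (st_facts D HD) as (Ht & Hts & Hs2 & Ht2).
  set (th := PI / INR (2 * k + 1)) in *.
  set (C := cos th) in *.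
  set (s := sD D) in *. set (t := tD D) in *.
  assert (HkR : 2 <= INR k) by (apply (le_INR 2); lia).
  assert (Hth : INR (2 * k + 1) * th = PI).
  { unfold th. field. apply not_0_INR. lia. }
  assert (H2k : INR (2 * k + 1) = 2 * INR k + 1).
  { rewrite plus_INR, mult_INR. simpl. lra. }
  assert (Hth0 : 0 < th) by (unfold th; apply Rdiv_lt_0_compat; [apply PI_RGT_0|lra]).
  assert (Hsinpos : forall j, (1 <= j)%nat -> (j <= k)%nat -> 0 < sin (INR j * th)).
  { intros j Hj1 Hj2. apply sin_gt_0.
    - apply Rmult_lt_0_compat; auto. apply lt_0_INR; lia.
    - rewrite <- Hth. apply Rmult_lt_compat_r; auto. apply lt_INR; lia. }
  set (a := sin (INR k * th)).
  assert (Ha : 0 < a) by (apply Hsinpos; lia).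
  assert (Hs0 : 0 < s) by lra.
  set (w := s * a / t).
  assert (Hw : 0 < w) by (unfold w; apply Rdiv_lt_0_compat; nra).
  set (u := fun i => if Nat.ltb i (k-1) then sin (INR (S i) * th) else w).
  assert (Hupos : forall i, (i < k)%nat -> 0 < u i).
  { intros i Hi. unfold u. destruct (Nat.ltb_spec i (k-1)); auto. apply Hsinpos; lia. }
  assert (Hu_lt : forall i, (i < k-1)%nat -> u i = sin (INR (S i) * th)).
  { intros i Hi. unfold u. destruct (Nat.ltb_spec i (k-1)); auto; lia. }
  assert (Hu_last : u (k-1)%nat = w).
  { unfold u. destruct (Nat.ltb_spec (k-1) (k-1)); auto; lia. }
  assert (R1 : forall i, (S i < k)%nat ->
     Xmat D k i (i-1) * u (i-1)%nat + Xmat D k i (S i) * u (S i) = 2 * s * C * u i).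
  { intros i Hi.
    assert (T1 : Xmat D k i (i-1) * u (i-1)%nat = s * sin (INR i * th)).
    { destruct i as [|i].
      - rewrite X_down0 by lia. replace (INR 0 * th) with 0 by (simpl; ring). rewrite sin_0. ring.
      - rewrite X_down_mid by lia. replace (S i - 1)%nat with i by lia. rewrite Hu_lt by lia. reflexivity. }
    assert (T3 : Xmat D k i (S i) * u (S i) = s * sin (INR (S (S i)) * th)).
    { rewrite X_up. destruct (Nat.eqb_spec (S i) (k-1)) as [E|E].
      - replace (S (S i)) with k by lia. rewrite E, Hu_last. unfold w. fold a t. field. lra.
      - rewrite Hu_lt by lia. reflexivity. }
    rewrite T1, T3, Hu_lt by lia.
    replace (INR (S (S i)) * th) with (INR (S i) * th + th) by (rewrite (S_INR (S i)); ring).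
    replace (INR i * th) with (INR (S i) * th - th) by (rewrite (S_INR i); ring).
    rewrite sin_rec. unfold C. ring. }
  assert (R2 : t * u (k-2)%nat + 2 * u (k-1)%nat < 2 * s * C * u (k-1)%nat).
  { rewrite Hu_last, Hu_lt by lia. replace (S (k-2)) with (k-1)%nat by lia.
    set (b := sin (INR (k-1) * th)).
    assert (Hb : a = 2 * C * a - b).
    { unfold a at 1, b, C. 
      assert (E : INR k * th = PI - (INR k * th + th)).
      { rewrite H2k in Hth. lra. }
      rewrite E, sin_PI_x. rewrite sin_rec.
      replace (INR k * th - th) with (INR (k-1) * th). fold a. ring.
      rewrite minus_INR by lia. simpl. ring. }
    unfold w. apply (Rmult_lt_reg_l t); auto.
    replace (t * (t * b + 2 * (s * a / t))) with (t * t * b + 2 * s * a) by (field; lra).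
    replace (t * (2 * s * C * (s * a / t))) with (2 * s * C * s * a) by (field; lra).
    assert (b = (2 * C - 1) * a) by lra. subst b.
    replace (t * t) with (s * s - 1) in * by lra.
    assert (0 < a * (2 * C - (1 + 2 * s - s * s))) by (apply Rmult_lt_0_compat; lra).
    nra. }
  destruct Heig as [v [[j0 [Hj0 Hv0]] Hrow]].
  apply Rnot_le_lt. intros Hl.
  destruct (argmax k (fun i => Rabs (v i) / u i) ltac:(lia)) as [i0 [Hi0 Hmax]].
  set (m := Rabs (v i0) / u i0) in *.
  assert (Hle : forall j, (j < k)%nat -> Rabs (v j) <= m * u j).
  { intros j Hj. specialize (Hmax j Hj). pose proof (Hupos j Hj).
    apply (Rmult_le_compat_r (u j)) in Hmax; [|lra]. field_simplify in Hmax; lra. }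
  assert (Hm : 0 < m).
  { specialize (Hmax j0 Hj0). pose proof (Hupos j0 Hj0). pose proof (Rabs_pos_lt _ Hv0).
    assert (0 < Rabs (v j0) / u j0) by (apply Rdiv_lt_0_compat; auto). lra. }
  assert (Hlam : 2 * s * C <= Rabs l) by lra.
  assert (Hprop : forall n, (i0 + n < k)%nat -> Rabs (v (i0 + n)%nat) = m * u (i0 + n)%nat).
  { induction n as [|n IH]; intros Hn.
    - rewrite Nat.add_0_r. unfold m. field. pose proof (Hupos i0 Hi0). lra.
    - replace (i0 + S n)%nat with (S (i0 + n)) by lia.
      set (i := (i0 + n)%nat) in *. specialize (IH ltac:(lia)).
      pose proof (Hrow i ltac:(lia)) as R. rewrite row_mid, X_mid_diag in R by lia.
      pose proof (X_nonneg D k i (i-1) HD) as HA.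
      pose proof (X_up_bounds D k i HD) as HB.
      set (A := Xmat D k i (i-1)) in *. set (B := Xmat D k i (S i)) in *.
      assert (E1 : Rabs l * Rabs (v i) <= A * Rabs (v (i-1)%nat) + B * Rabs (v (S i))).
      { rewrite <- Rabs_mult. replace (l * v i) with (A * v (i-1)%nat + B * v (S i)) by lra.
        eapply Rle_trans; [apply Rabs_triang|]. rewrite !Rabs_mult, (Rabs_pos_eq A), (Rabs_pos_eq B); lra. }
      assert (E2 : A * Rabs (v (i-1)%nat) <= A * (m * u (i-1)%nat)) by (apply Rmult_le_compat_l; auto; apply Hle; lia).
      assert (E3 : 2 * s * C * (m * u i) <= Rabs l * Rabs (v i)).
      { rewrite IH. apply Rmult_le_compat_r; auto. pose proof (Hupos i ltac:(lia)). nra. }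
      pose proof (R1 i ltac:(lia)) as R1i. fold A B in R1i.
      assert (E4 : B * (m * u (S i)) <= B * Rabs (v (S i))).
      { replace (2 * s * C * (m * u i)) with (m * (A * u (i-1)%nat + B * u (S i))) in E3 by (rewrite R1i; ring).
        lra. }
      apply Rmult_le_reg_l in E4; [|lra]. specialize (Hle (S i) ltac:(lia)). lra. }
  assert (Hlast : Rabs (v (k-1)%nat) = m * w).
  { rewrite <- Hu_last. replace (k-1)%nat with (i0 + (k-1-i0))%nat by lia. apply Hprop. lia. }
  pose proof (Hrow (k-1)%nat ltac:(lia)) as R. rewrite row_last, X_last_down, X_last_diag in R by lia.
  fold t in R.
  assert (E1 : Rabs l * Rabs (v (k-1)%nat) <= t * Rabs (v (k-2)%nat) + 2 * Rabs (v (k-1)%nat)).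
  { rewrite <- Rabs_mult. replace (l * v (k-1)%nat) with (t * v (k-2)%nat + 2 * v (k-1)%nat) by lra.
    eapply Rle_trans; [apply Rabs_triang|]. rewrite !Rabs_mult, (Rabs_pos_eq t), (Rabs_pos_eq 2); lra. }
  assert (E2 : t * Rabs (v (k-2)%nat) <= t * (m * u (k-2)%nat)) by (apply Rmult_le_compat_l; [lra|]; apply Hle; lia).
  assert (E3 : 2 * s * C * (m * w) <= Rabs l * (m * w)) by (apply Rmult_le_compat_r; nra).
  rewrite Hu_last in R2.
  assert (E5 : m * (t * u (k-2)%nat + 2 * w) < m * (2 * s * C * w)) by (apply Rmult_lt_compat_l; auto).
  rewrite Hlast in E1. nra.
Qed.
Theorem mainTheorem9 (Delta k : nat) (hD : (3 <= Delta)%nat) (hk : (2 <= k)%nat)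
  (hcase : (4 <= Delta)%nat \/ (Delta = 3%nat /\ (4 <= k)%nat)) :
  spectral_radius k (Xmat Delta k)
    < 2 * sqrt (INR Delta - 1) * cos (PI / INR (2 * k + 1)).
Proof.
  change (sqrt (INR Delta - 1)) with (sD Delta).
  set (c := 2 * sD Delta * cos (PI / INR (2 * k + 1))).
  set (E := fun r => exists lambda, is_eigenvalue k (Xmat Delta k) lambda /\ r = Rabs lambda).
  assert (HE : forall r, E r -> r < c).
  { intros r [l [Hl ->]]. apply eig_bound; auto. }
  assert (HG : forall r, E r -> F Delta k r * F Delta k (- r) = 0).
  { intros r [l [Hl ->]]. pose proof (eig_root _ _ _ hD hk Hl) as H0.
    destruct (Rcase_abs l).
    - rewrite Rabs_left by auto. rewrite Ropp_involutive, H0. ring.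
    - rewrite Rabs_right by auto. rewrite H0. ring. }
  assert (Hex : exists L, is_lub E L).
  { destruct (F_root Delta k hD hk) as [l0 Hl0].
    destruct (completeness E) as [L HL].
    - exists c. intros r Hr. left. apply HE, Hr.
    - exists (Rabs l0). exists l0. split; auto. apply root_eig; auto.
    - exists L; exact HL. }
  unfold spectral_radius. fold E.
  pose proof (epsilon_spec (inhabits 0) (is_lub E) Hex) as HL.
  set (L := epsilon (inhabits 0) (is_lub E)) in *. clearbody L.
  assert (HGL : F Delta k L * F Delta k (- L) = 0).
  { apply NNPP. intros Hne.
    assert (Hc : continuity_pt (fun x => F Delta k x * F Delta k (- x)) L).
    { apply (continuity_pt_mult (F Delta k) (fun x => F Delta k (- x))).
      - apply F_cont.
      - apply (continuity_pt_comp (fun x => - x) (F Delta k)).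
        + apply (continuity_pt_opp (fun x => x)). apply derivable_continuous_pt, derivable_pt_id.
        + apply F_cont. }
    unfold continuity_pt, continue_in, limit1_in, limit_in in Hc.
    destruct (Hc (Rabs (F Delta k L * F Delta k (- L)))) as [alp [Halp Hd]].
    { apply Rabs_pos_lt; auto. }
    assert (Hr : exists r, E r /\ L - alp/2 < r).
    { apply NNPP. intros Hn.
      assert (Hub : is_upper_bound E (L - alp/2)).
      { intros r Hr. apply Rnot_lt_le. intros Hlt. apply Hn. exists r; auto. }
      destruct HL as [_ HL2]. specialize (HL2 _ Hub). lra. }
    destruct Hr as [r [Hr1 Hr2]].
    assert (HrL : r <= L) by (destruct HL as [HL1 _]; apply HL1; auto).
    destruct (Req_dec r L) as [<-|Hne2].
    - apply Hne. apply HG; auto.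
    - specialize (Hd r). simpl in Hd. unfold R_dist in Hd.
      rewrite (HG r Hr1) in Hd. rewrite Rminus_0_l, Rabs_Ropp in Hd.
      assert (Rabs (r - L) < alp).
      { rewrite Rabs_left1 by lra. lra. }
      specialize (Hd (conj (conj I (not_eq_sym Hne2)) H)). lra. }
  apply Rmult_integral in HGL.
  destruct HGL as [H0 | H0]; apply root_eig in H0; auto.
  - pose proof (HE (Rabs L) (ex_intro _ L (conj H0 eq_refl))). pose proof (Rle_abs L). lra.
  - pose proof (HE (Rabs (-L)) (ex_intro _ (-L) (conj H0 eq_refl))). rewrite Rabs_Ropp in H. pose proof (Rle_abs L). lra.
Qed.
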